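(* For all $m = 1,2,\ldots$ and all $r = 0,1,\ldots,m$, the stopping redundancy of the binary Reed–Muller code $\mathcal{R}(r,m)$ satisfies $$\rho(\mathcal{R}(r,m)) \le \sum_{i=0}^{m-r-1} \binom{r+i}{i} 2^i.$$
   Context: The binary Reed–Muller code $\mathcal{R}(r,m)$ of order $r$ and length $2^m$ is the row space of $G(r,m)$, where $G(m,m) = I_{2^m}$, $G(0,m) = (11\cdots1)$, and for $0<r<m$, $G(r,m) = \begin{pmatrix} G(r,m-1) & G(r,m-1) \\ \mathbf{0} & G(r-1,m-1)\end{pmatrix}$; its minimum distance is $2^{m-r}$. A parity-check matrix for a linear code $\mathcal{C}$ is any matrix (possibly with linearly dependent rows) whose rows span $\mathcal{C}^\perp$. For a parity-check matrix $H$, the stopping distance $s(H)$ is the largest integer such that for every set of $s(H)-1$ or fewer columns of $H$, the projection of $H$ onto those columns contains at least one row of Hamming weight exactly one. The stopping redundancy $\rho(\mathcal{C})$ is the smallest number of rows of a parity-check matrix $H$ for $\mathcal{C}$ with $s(H)$ equal to the minimum distance of $\mathcal{C}$. *)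

(* Defs.v *)
From mathcomp Require Import all_boot all_order all_algebra.
Set Implicit Arguments. Unset Strict Implicit. Unset Printing Implicit Defensive.
Import GRing.Theory.
Local Open Scope ring_scope.

(* Rows of the generator matrix G(r,m) of the binary Reed-Muller code R(r,m),
   as lists of length 2^m over F_2, following the recursive definition:
   G(m,m) = I, G(0,m) = all-ones row, and for 0<r<m
   G(r,m) = [G(r,m-1) G(r,m-1); 0 G(r-1,m-1)].
   (For r > m, which is never used, we also return the identity.) *)
Definition id_rows (n : nat) : seq (seq 'F_2) :=
  mkseq (fun i => mkseq (fun j => ((i == j) : nat)%:R) n) n.

Fixpoint RM_rows (r m : nat) {struct m} : seq (seq 'F_2) :=
  match m with
  | 0 => id_rows 1
  | m'.+1 =>
      if (m'.+1 <= r)%N then id_rows (2 ^ m'.+1)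
      else match r with
           | 0 => [:: nseq (2 ^ m'.+1) 1]
           | r'.+1 =>
               map (fun g => g ++ g) (RM_rows r m') ++
               map (fun h => nseq (2 ^ m') 0 ++ h) (RM_rows r' m')
           end
  end.

Definition RM_gen (r m : nat) : 'M['F_2]_(size (RM_rows r m), 2 ^ m) :=
  \matrix_(i, j) nth 0 (nth [::] (RM_rows r m) i) j.

Definition wt n (v : 'rV['F_2]_n) : nat := #|[set j | v 0 j != 0]|.

(* Minimum distance of the code given by the row space of G (defaults to n
   if the code has no nonzero codeword, which does not happen here). *)
Definition min_dist k n (G : 'M['F_2]_(k, n)) : nat :=
  \big[minn/n]_(c : 'rV['F_2]_n | (c <= G)%MS && (c != 0)) wt c.

Definition parity_check k n (G : 'M['F_2]_(k, n)) l (H : 'M['F_2]_(l, n)) :=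
  forall v : 'rV['F_2]_n,
    (v <= H)%MS <-> (forall c : 'rV['F_2]_n, (c <= G)%MS -> c *m v^T = 0).

Definition stop_ok l n (H : 'M['F_2]_(l, n)) (s : nat) : Prop :=
  forall S : {set 'I_n}, (0 < #|S|)%N -> (#|S| < s)%N ->
    exists i : 'I_l, #|[set j in S | H i j != 0]| = 1%N.

Definition stopping_distance_is l n (H : 'M['F_2]_(l, n)) (s : nat) : Prop :=
  stop_ok H s /\ ~ stop_ok H s.+1.

Definition stopping_redundancy_le k n (G : 'M['F_2]_(k, n)) (N : nat) : Prop :=
  exists (l : nat) (H : 'M['F_2]_(l, n)),
    (l <= N)%N /\ parity_check G H /\ stopping_distance_is H (min_dist G).

(* Main.v *)
Require Import Defs.
From mathcomp Require Import all_boot all_order all_algebra zify.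
Set Implicit Arguments. Unset Strict Implicit. Unset Printing Implicit Defensive.
Import GRing.Theory.
Local Open Scope ring_scope.


Lemma F2cases (x : 'F_2) : x = 0 \/ x = 1.
Proof. case: x => [[|[|k]]] //= H; [left|right]; exact/val_inj. Qed.

Lemma F2addd (x : 'F_2) : x + x = 0.
Proof. case: (F2cases x) => ->. by rewrite addr0. apply/val_inj. by []. Qed.

Lemma F2mul (x y : 'F_2) : x * y = ((x != 0) && (y != 0) : nat)%:R.
Proof. by case: (F2cases x) => ->; case: (F2cases y) => ->; rewrite ?mulr0 ?mul0r ?mulr1 ?oner_eq0 ?eqxx. Qed.

Lemma F2neq0 (x : 'F_2) : x != 0 -> x = 1.
Proof. by case: (F2cases x) => ->. Qed.

Definition vadd (s t : seq 'F_2) := mkseq (fun k => nth 0 s k + nth 0 t k) (size s).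

Lemma size_vadd s t : size (vadd s t) = size s.
Proof. by rewrite size_mkseq. Qed.

Lemma nth_vadd s t k : size s = size t ->
  nth 0 (vadd s t) k = nth 0 s k + nth 0 t k.
Proof.
move=> E; rewrite /vadd; case: (ltnP k (size s)) => h; first by rewrite nth_mkseq.
by rewrite !nth_default ?size_mkseq -?E ?addr0.
Qed.

Lemma seq_eq (s t : seq 'F_2) : size s = size t ->
  (forall k, nth 0 s k = nth 0 t k) -> s = t.
Proof. by move=> E H; apply: (eq_from_nth E) => k _; apply: H. Qed.

Lemma vadd0l n y : size y = n -> vadd (nseq n 0) y = y.
Proof.
move=> E; apply: seq_eq; first by rewrite size_vadd size_nseq.
by move=> k; rewrite nth_vadd ?size_nseq // nth_nseq if_same add0r.
Qed.

Lemma vaddK x y : size x = size y -> vadd (vadd x y) y = x.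
Proof.
move=> E; apply: seq_eq; first by rewrite !size_vadd.
by move=> k; rewrite !nth_vadd ?size_vadd // -addrA F2addd addr0.
Qed.

Lemma vaddC x y : size x = size y -> vadd x y = vadd y x.
Proof.
move=> E; apply: seq_eq; first by rewrite !size_vadd.
by move=> k; rewrite !nth_vadd // addrC.
Qed.

Lemma vaddA x y z : size x = size y -> size y = size z ->
  vadd (vadd x y) z = vadd x (vadd y z).
Proof.
move=> E1 E2; apply: seq_eq; first by rewrite !size_vadd.
by move=> k; rewrite !nth_vadd ?size_vadd ?E1 ?E2 // addrA.
Qed.

Lemma vadd_cat a b c d : size a = size c -> size b = size d ->
  vadd (a ++ b) (c ++ d) = vadd a c ++ vadd b d.
Proof.
move=> E1 E2; apply: seq_eq; first by rewrite size_vadd !size_cat !size_vadd.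
move=> k; rewrite nth_vadd ?size_cat ?E1 ?E2 // !nth_cat size_vadd -E1.
by case: ifP => _; rewrite nth_vadd.
Qed.

Lemma vadd00 n : vadd (nseq n 0) (nseq n 0) = nseq n 0.
Proof. by rewrite vadd0l // size_nseq. Qed.

Inductive lspan (L : seq (seq 'F_2)) (n : nat) : seq 'F_2 -> Prop :=
| lspan0 : lspan L n (nseq n 0)
| lspanS h v : h \in L -> size h = n -> lspan L n v -> lspan L n (vadd h v).

Lemma lspan_size L n v : lspan L n v -> size v = n.
Proof. by elim=> [|h w _ E _ _]; rewrite ?size_nseq ?size_vadd. Qed.

Lemma lspan_add L n u v : lspan L n u -> lspan L n v -> lspan L n (vadd u v).
Proof.
move=> Hu Hv; elim: Hu.
  by rewrite vadd0l //; apply: lspan_size Hv.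
move=> h w hL hs Hw IH; rewrite vaddA ?hs ?(lspan_size Hw) ?(lspan_size Hv) //.
exact: lspanS.
Qed.

Lemma lspan_mem L n h : h \in L -> size h = n -> lspan L n h.
Proof.
move=> hL hs; have := lspanS hL hs (lspan0 L n).
by rewrite vaddC ?size_nseq // vadd0l.
Qed.

Lemma lspan_sub L L' n v : {subset L <= L'} -> lspan L n v -> lspan L' n v.
Proof.
move=> sub; elim; first exact: lspan0.
by move=> h w hL hs _ IH; apply: lspanS => //; apply: sub.
Qed.

Lemma lspan_map (f : seq 'F_2 -> seq 'F_2) L n n' v :
  (forall h, size h = n -> size (f h) = n') ->
  f (nseq n 0) = nseq n' 0 ->
  (forall u w, size u = n -> size w = n -> f (vadd u w) = vadd (f u) (f w)) ->
  lspan L n v -> lspan (map f L) n' (f v).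
Proof.
move=> fs f0 fadd; elim; first by rewrite f0; apply: lspan0.
move=> h w hL hs Hw IH; rewrite fadd //; last exact: lspan_size Hw.
by apply: lspanS => //; [apply: map_f | apply: fs].
Qed.

Lemma lspan_dbl L n v : lspan L n v -> lspan (map (fun a => a ++ a) L) (n + n) (v ++ v).
Proof.
apply: (lspan_map (f := fun a => a ++ a)).
- by move=> h E; rewrite size_cat E.
- by rewrite nseqD.
- by move=> u w E1 E2; rewrite vadd_cat // E1 E2.
Qed.

Lemma lspan_padr L n k v : lspan L n v ->
  lspan (map (fun a => a ++ nseq k 0) L) (n + k) (v ++ nseq k 0).
Proof.
apply: (lspan_map (f := fun a => a ++ nseq k 0)).
- by move=> h E; rewrite size_cat E size_nseq.
- by rewrite nseqD.
- by move=> u w E1 E2; rewrite vadd_cat ?E1 ?E2 // vadd00.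
Qed.

Lemma lspan_padl L n k v : lspan L n v ->
  lspan (map (fun a => nseq k 0 ++ a) L) (k + n) (nseq k 0 ++ v).
Proof.
apply: (lspan_map (f := fun a => nseq k 0 ++ a)).
- by move=> h E; rewrite size_cat E size_nseq.
- by rewrite nseqD.
- by move=> u w E1 E2; rewrite vadd_cat ?E1 ?E2 // vadd00.
Qed.

Definition ldot n (s t : seq 'F_2) := \sum_(k < n) nth 0 s k * nth 0 t k.

Lemma ldotC n s t : ldot n s t = ldot n t s.
Proof. by apply: eq_bigr => k _; rewrite mulrC. Qed.

Lemma ldot_cat n1 n2 a b c d : size a = n1 -> size c = n1 ->
  ldot (n1 + n2) (a ++ b) (c ++ d) = ldot n1 a c + ldot n2 b d.
Proof.
move=> E1 E2; rewrite /ldot big_split_ord /=; congr (_ + _).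
  by apply: eq_bigr => k _; rewrite !nth_cat E1 E2 ltn_ord.
apply: eq_bigr => k _; rewrite !nth_cat E1 E2 ltnNge leq_addr /=.
by rewrite addKn.
Qed.

Lemma ldot_addl n u v t : size u = size v ->
  ldot n (vadd u v) t = ldot n u t + ldot n v t.
Proof.
move=> E; rewrite /ldot -big_split /=; apply: eq_bigr => k _.
by rewrite nth_vadd // mulrDl.
Qed.

Lemma ldot_addr n u v t : size u = size v ->
  ldot n t (vadd u v) = ldot n t u + ldot n t v.
Proof. by move=> E; rewrite ldotC ldot_addl // !(ldotC n t). Qed.

Lemma ldot0l n k t : ldot n (nseq k 0) t = 0.
Proof. by rewrite /ldot big1 // => i _; rewrite nth_nseq if_same mul0r. Qed.

Lemma ldot_span L n v t : (forall g, g \in L -> ldot n g t = 0) ->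
  lspan L n v -> ldot n v t = 0.
Proof.
move=> H; elim; first exact: ldot0l.
by move=> h w hL hs Hw IH; rewrite ldot_addl ?(lspan_size Hw) // H // IH addr0.
Qed.


Lemma expS2 m : (2 ^ m.+1 = 2 ^ m + 2 ^ m)%N.
Proof. by rewrite expnS mul2n -addnn. Qed.

Definition e0 n : seq 'F_2 := mkseq (fun j => ((0 == j) : nat)%:R) n.

Fixpoint Hrows (r m : nat) {struct m} : seq (seq 'F_2) :=
  match m with
  | 0 => [::]
  | m'.+1 =>
      if (m'.+1 <= r)%N then [::]
      else (match r with
            | 0 => [:: e0 (2 ^ m') ++ e0 (2 ^ m')]
            | r'.+1 => map (fun b => b ++ b) (Hrows r' m')
            end)
           ++ map (fun a => a ++ nseq (2 ^ m') 0) (Hrows r m')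
           ++ map (fun a => nseq (2 ^ m') 0 ++ a) (Hrows r m')
  end.

Lemma id_rows_size n g : g \in id_rows n -> size g = n.
Proof. by case/mapP=> i _ ->; rewrite size_mkseq. Qed.

Lemma e0_id n : (0 < n)%N -> e0 n \in id_rows n.
Proof.
move=> n0; apply: (map_f (fun i => mkseq (fun j => ((i == j) : nat)%:R) n)).
by rewrite mem_iota.
Qed.

Lemma size_e0 n : size (e0 n) = n.
Proof. by rewrite size_mkseq. Qed.

Lemma size_RM r m g : g \in RM_rows r m -> size g = (2 ^ m)%N.
Proof.
elim: m r g => [|m IH] r g /=; first exact: id_rows_size.
case: ifP => _; first exact: id_rows_size.
case: r => [|r]; first by rewrite mem_seq1 => /eqP ->; rewrite size_nseq.
rewrite mem_cat expS2 => /orP[] /mapP[h hin ->]; rewrite size_cat ?size_nseq (IH _ _ hin) //.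
Qed.

Lemma size_Hrows r m h : h \in Hrows r m -> size h = (2 ^ m)%N.
Proof.
elim: m r h => [|m IH] r h //=.
case: ifP => _ //.
rewrite !mem_cat expS2 => /orP[|/orP[]].
- case: r => [|r]; first by rewrite mem_seq1 => /eqP ->; rewrite size_cat size_e0.
  by case/mapP=> b bin ->; rewrite size_cat (IH _ _ bin).
- by case/mapP=> b bin ->; rewrite size_cat (IH _ _ bin) size_nseq.
- by case/mapP=> b bin ->; rewrite size_cat (IH _ _ bin) size_nseq.
Qed.

Lemma RM0 m : RM_rows 0 m = [:: nseq (2 ^ m) 1].
Proof. by case: m. Qed.

Lemma id_span n v : size v = n -> lspan (id_rows n) n v.
Proof.
move=> sv.
have H : forall j, (j <= n)%N ->
  lspan (id_rows n) n (mkseq (fun k => if (k < j)%N then nth 0 v k else 0) n).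
  elim=> [|j IH] jn.
    have -> : mkseq (fun k => if (k < 0)%N then nth 0 v k else 0) n = nseq n 0.
      apply: seq_eq => [|k]; rewrite ?size_mkseq ?size_nseq // nth_nseq.
      by case: (ltnP k n) => kn; [rewrite nth_mkseq | rewrite nth_default ?size_mkseq].
    exact: lspan0.
  have IH' := IH (ltnW jn).
  case: (F2cases (nth 0 v j)) => vj.
    suff -> : mkseq (fun k => if (k < j.+1)%N then nth 0 v k else 0) n =
              mkseq (fun k => if (k < j)%N then nth 0 v k else 0) n by [].
    apply: seq_eq => [|k]; rewrite ?size_mkseq //.
    case: (ltnP k n) => kn; last by rewrite !nth_default ?size_mkseq.
    rewrite !nth_mkseq // ltnS leq_eqVlt; case: eqP => // ->; by rewrite ltnn vj.
  pose ej : seq 'F_2 := mkseq (fun k => ((j == k) : nat)%:R) n.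
  have ejin : ej \in id_rows n.
    by apply: (map_f (fun i => mkseq (fun k => ((i == k) : nat)%:R) n)); rewrite mem_iota.
  have := lspanS ejin (size_mkseq _ _) IH'.
  suff -> : vadd ej (mkseq (fun k => if (k < j)%N then nth 0 v k else 0) n) =
            mkseq (fun k => if (k < j.+1)%N then nth 0 v k else 0) n by [].
  apply: seq_eq => [|k]; rewrite ?size_vadd ?size_mkseq //.
  rewrite nth_vadd ?size_mkseq //.
  case: (ltnP k n) => kn; last by rewrite !nth_default ?size_mkseq ?addr0.
  rewrite /ej !nth_mkseq // ltnS; case: (ltngtP k j) => [kj|kj|->].
  - by rewrite add0r.
  - by rewrite add0r.
  - by rewrite addr0 vj.
have := H n (leqnn n).
suff -> : mkseq (fun k => if (k < n)%N then nth 0 v k else 0) n = v by [].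
apply: seq_eq => [|k]; rewrite ?size_mkseq //.
case: (ltnP k n) => kn; last by rewrite !nth_default ?size_mkseq ?sv.
by rewrite nth_mkseq // kn.
Qed.


Lemma subset_catl (T : eqType) (a b : seq T) : {subset a <= a ++ b}.
Proof. by move=> x xin; rewrite mem_cat xin. Qed.
Lemma subset_catr (T : eqType) (a b : seq T) : {subset b <= a ++ b}.
Proof. by move=> x xin; rewrite mem_cat xin orbT. Qed.

Lemma nest m r g : g \in RM_rows r m -> lspan (RM_rows r.+1 m) (2 ^ m) g.
Proof.
elim: m r g => [|m IH] r g.
  by move=> gin; apply: lspan_mem gin (id_rows_size gin).
rewrite [RM_rows r.+1 m.+1]/=; case: ifP => Hle.
  by move=> gin; apply: id_span; exact: size_RM gin.
have Hle' : (m.+1 <= r)%N = false by apply/negbTE/negP => h; rewrite leqW in Hle.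
rewrite /= Hle' expS2.
case: r IH Hle Hle' => [|r] IH Hle Hle'.
  rewrite mem_seq1 => /eqP ->; rewrite nseqD.
  apply: lspan_sub (lspan_dbl (IH 0%N _ _)); first exact: subset_catl.
  by rewrite RM0 mem_seq1.
rewrite mem_cat => /orP[] /mapP[h hin ->].
  by apply: lspan_sub (lspan_dbl (IH _ _ hin)); exact: subset_catl.
by apply: lspan_sub (lspan_padl _ (IH _ _ hin)); exact: subset_catr.
Qed.

Lemma ldot_e0 n s : (0 < n)%N -> ldot n s (e0 n) = nth 0 s 0.
Proof.
move=> n0; rewrite /ldot (bigD1 (Ordinal n0)) //= big1 ?addr0.
  by rewrite nth_mkseq // mulr1.
move=> i /eqP ne; rewrite nth_mkseq //; case: eqP => [e|]; last by rewrite mulr0.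
by exfalso; apply: ne; apply: val_inj; rewrite /= -e.
Qed.

Lemma orth m r g h : (r <= m)%N -> g \in RM_rows r m -> h \in Hrows r m ->
  ldot (2 ^ m) g h = 0.
Proof.
elim: m r g h => [|m IH] r g h rm //=.
case: ifP => Hle //.
have rm' : (r <= m)%N by lia.
rewrite expS2.
case: r rm Hle rm' => [|r] rm Hle rm'.
  rewrite mem_seq1 => /eqP -> {g}; rewrite nseqD.
  have IH0 : forall a, a \in Hrows 0 m -> ldot (2 ^ m) (nseq (2 ^ m) 1) a = 0.
    by move=> a ain; apply: IH ain => //; rewrite RM0 mem_seq1.
  rewrite !mem_cat => /orP[|/orP[]].
  - by rewrite mem_seq1 => /eqP ->; rewrite ldot_cat ?size_nseq ?size_e0 // F2addd.
  - case/mapP=> a ain ->; rewrite ldot_cat ?size_nseq ?(size_Hrows ain) //.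
    by rewrite (IH0 a ain) ldotC ldot0l addr0.
  - case/mapP=> a ain ->; rewrite ldot_cat ?size_nseq ?(size_Hrows ain) //.
    by rewrite (IH0 a ain) ldotC ldot0l add0r.
rewrite !mem_cat => /orP[] /mapP[g' g'in ->] /orP[|/orP[]] /mapP[a ain ->];
  rewrite ldot_cat ?size_nseq ?(size_Hrows ain) ?(size_RM g'in) //.
- by rewrite F2addd.
- by rewrite (IH _ _ _ _ g'in ain) // ldotC ldot0l addr0.
- by rewrite (IH _ _ _ _ g'in ain) // ldotC ldot0l add0r.
- by rewrite ldot0l (IH _ _ _ _ g'in ain) ?addr0 //; lia.
- by rewrite ldot0l ldotC ldot0l addr0.
- rewrite ldot0l add0r; apply: ldot_span (nest g'in) => g'' g''in.
  exact: IH g''in ain.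
Qed.


Lemma span_pads r m z : (r <= m)%N -> lspan (Hrows r m) (2 ^ m) z ->
  lspan (Hrows r m.+1) (2 ^ m + 2 ^ m) (z ++ nseq (2 ^ m) 0) /\
  lspan (Hrows r m.+1) (2 ^ m + 2 ^ m) (z ++ z).
Proof.
move=> rm Hz.
have Hle : (m.+1 <= r)%N = false by lia.
have sz := lspan_size Hz.
have H1 : lspan (Hrows r m.+1) (2 ^ m + 2 ^ m) (z ++ nseq (2 ^ m) 0).
  apply: lspan_sub (lspan_padr _ Hz); rewrite /= Hle => x xin.
  by rewrite !mem_cat xin !orbT.
have H2 : lspan (Hrows r m.+1) (2 ^ m + 2 ^ m) (nseq (2 ^ m) 0 ++ z).
  apply: lspan_sub (lspan_padl _ Hz); rewrite /= Hle => x xin.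
  by rewrite !mem_cat xin !orbT.
split=> //.
have := lspan_add H1 H2; rewrite vadd_cat ?size_nseq // vadd0l //.
by rewrite vaddC ?size_nseq // vadd0l.
Qed.

Lemma span_dual m r v : (r <= m)%N -> size v = (2 ^ m)%N ->
  (forall g, g \in RM_rows r m -> ldot (2 ^ m) g v = 0) ->
  lspan (Hrows r m) (2 ^ m) v.
Proof.
elim: m r v => [|m IH] r v rm sv H.
  have r0 : r = 0%N by lia.
  subst r; have := H [:: 1]; rewrite /ldot big_ord1 /= mul1r => /(_ (mem_head _ _)).
  case: v sv {H} => [|x [|]] //= _ ->; exact: (lspan0 _ 1).
case Hle: (m.+1 <= r)%N.
  rewrite /= Hle.
  suff -> : v = nseq (2 ^ m.+1) 0 by exact: lspan0.
  apply: seq_eq => [|k]; rewrite ?size_nseq // nth_nseq.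
  case: (ltnP k (2 ^ m.+1)) => kn; last by rewrite nth_default ?sv.
  pose ek : seq 'F_2 := mkseq (fun j => ((k == j) : nat)%:R) (2 ^ m.+1).
  have ekin : ek \in RM_rows r m.+1.
    rewrite /= Hle.
    apply: (map_f (fun i => mkseq (fun j => ((i == j) : nat)%:R) (2 ^ m.+1))).
    by rewrite mem_iota.
  have := H _ ekin; rewrite /ldot (bigD1 (Ordinal kn)) //= big1 ?addr0.
    by rewrite nth_mkseq // eqxx mul1r.
  move=> i /eqP ne; rewrite nth_mkseq //; case: eqP => [e|]; last by rewrite mul0r.
  by exfalso; apply: ne; apply: val_inj; rewrite /= -e.
have rm' : (r <= m)%N by lia.
rewrite expS2 in sv H *.
set n := (2 ^ m)%N in sv H *.
pose x := take n v; pose y := drop n v.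
have sx : size x = n by rewrite size_takel // sv leq_addr.
have sy : size y = n by rewrite size_drop sv addnK.
have vE : v = x ++ y by rewrite cat_take_drop.
have key : lspan (Hrows r m.+1) (n + n) (vadd (vadd x y) y ++ vadd (nseq n 0) y) ->
    lspan (Hrows r m.+1) (n + n) v.
  by rewrite vaddK ?sy // vadd0l // -vE.
apply: key; rewrite -vadd_cat ?size_vadd ?size_nseq ?sx ?sy //.
have Hxy : lspan (Hrows r m) n (vadd x y).
  apply: IH => //; first by rewrite size_vadd.
  move=> g gin; rewrite ldot_addr ?sx ?sy //.
  have : (g ++ g) \in RM_rows r m.+1 \/ (r = 0%N /\ g = nseq n 1).
    case: r rm Hle H rm' gin => [|r] rm Hle H rm' gin.
      by right; split=> //; move: gin; rewrite RM0 mem_seq1 => /eqP.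
    by left; rewrite /= Hle mem_cat (map_f (fun g0 => g0 ++ g0) gin).
  case=> [Gin|[r0 gE]].
    by have := H _ Gin; rewrite vE ldot_cat // (size_RM gin).
  have := H (nseq (2 ^ m.+1) 1); rewrite r0 /= expS2 nseqD vE ldot_cat ?size_nseq //.
  by rewrite -gE; apply; rewrite mem_seq1.
apply: lspan_add; first exact: (span_pads rm' Hxy).1.
case: r rm Hle H IH rm' Hxy => [|r] rm Hle H IH rm' Hxy.
  have H0 : forall z, size z = n -> ldot n (nseq n 1) z = 0 -> lspan (Hrows 0 m) n z.
    move=> z sz Hz; apply: IH => //; move=> g; rewrite RM0 mem_seq1 => /eqP -> //.
  have n0 : (0 < n)%N by rewrite expn_gt0.
  case: (F2cases (ldot n (nseq n 1) y)) => Ey.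
    exact: (span_pads rm' (H0 y sy Ey)).2.
  pose y' := vadd y (e0 n).
  have sy' : size y' = n by rewrite size_vadd.
  have Ey' : ldot n (nseq n 1) y' = 0.
    by rewrite ldot_addr ?size_e0 // Ey ldot_e0 // nth_nseq n0 F2addd.
  have := lspan_add (lspan_mem (h := e0 n ++ e0 n) _ _) (span_pads rm' (H0 y' sy' Ey')).2.
  rewrite vadd_cat ?size_e0 // /y' vaddC ?size_vadd ?size_e0 // vaddK ?size_e0 //.
  apply.
    by rewrite /=; exact: mem_head.
  by rewrite size_cat size_e0.
apply: lspan_sub (lspan_dbl (IH r y _ sy _)); first by rewrite /= Hle => z zin; rewrite mem_cat zin.
  by lia.
move=> g gin.
have Gin : (nseq n 0 ++ g) \in RM_rows r.+1 m.+1.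
  by rewrite /= Hle mem_cat (map_f (fun h0 => nseq n 0 ++ h0) gin) orbT.
by have := H _ Gin; rewrite vE ldot_cat ?size_nseq // ldot0l add0r.
Qed.


Definition cnt n (S : pred nat) := count S (iota 0 n).
Definition inter n (S : pred nat) (h : seq 'F_2) :=
  count (fun k => S k && (nth 0 h k != 0)) (iota 0 n).

Lemma iota_split n1 n2 : iota 0 (n1 + n2) = iota 0 n1 ++ map (addn n1) (iota 0 n2).
Proof. by rewrite iotaD add0n -iotaDl addn0. Qed.

Lemma cnt_cat n1 n2 S : cnt (n1 + n2) S = (cnt n1 S + cnt n2 (fun k => S (n1 + k)%N))%N.
Proof. by rewrite /cnt iota_split count_cat count_map. Qed.

Lemma inter_cat n1 n2 S a b : size a = n1 ->
  inter (n1 + n2) S (a ++ b) = (inter n1 S a + inter n2 (fun k => S (n1 + k)%N) b)%N.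
Proof.
move=> sa; rewrite /inter iota_split count_cat count_map; congr (_ + _)%N.
  apply: eq_in_count => k; rewrite mem_iota add0n => /= kn.
  by rewrite nth_cat sa kn.
apply: eq_count => k /=; rewrite nth_cat sa ltnNge leq_addr /= addKn //.
Qed.

Lemma inter_nseq n S k : inter n S (nseq k 0) = 0%N.
Proof.
rewrite /inter (eq_count (a2 := pred0)) ?count_pred0 // => i /=.
by rewrite nth_nseq if_same andbF.
Qed.

Lemma inter_le n S h : (inter n S h <= cnt n S)%N.
Proof. by apply: sub_count => k /andP[]. Qed.

Lemma cnt_le n S : (cnt n S <= n)%N.
Proof. by rewrite /cnt -{2}(size_iota 0 n) count_size. Qed.

Lemma cnt0 n S k : cnt n S = 0%N -> (k < n)%N -> S k = false.
Proof.
move=> c kn; apply/negbTE/negP => Sk.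
have : has S (iota 0 n) by apply/hasP; exists k; rewrite ?mem_iota.
by rewrite has_count /cnt in c *; rewrite c.
Qed.

Lemma cntn n S k : cnt n S = n -> (k < n)%N -> S k.
Proof.
move=> c kn; have : all S (iota 0 n) by rewrite all_count size_iota; apply/eqP.
by move/allP; apply; rewrite mem_iota.
Qed.

Lemma inter_e0 n S : (0 < n)%N -> inter n S (e0 n) = S 0%N.
Proof.
case: n => [//|n] _; rewrite /inter /= andbT.
rewrite (eq_in_count (a2 := pred0)) ?count_pred0 ?addn0 // => k.
rewrite mem_iota => /andP[k1 kn] /=.
by rewrite /e0 nth_mkseq ?(leq_trans kn) // (ltn_eqF k1) /= andbF.
Qed.

Lemma stop m r S : (r <= m)%N -> (0 < cnt (2 ^ m) S)%N ->
  (cnt (2 ^ m) S < 2 ^ (m - r))%N ->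
  exists2 h, h \in Hrows r m & inter (2 ^ m) S h = 1%N.
Proof.
elim: m r S => [|m IH] r S rm c0 cd.
  by rewrite sub0n expn0 in cd; rewrite expn0 in c0; lia.
case Hle: (m.+1 <= r)%N.
  have E0 : (m.+1 - r = 0)%N by lia.
  by rewrite E0 expn0 in cd; lia.
have rm' : (r <= m)%N by lia.
have E : (2 ^ (m.+1 - r) = 2 ^ (m - r) + 2 ^ (m - r))%N by rewrite subSn // expS2.
rewrite E expS2 cnt_cat in cd; rewrite expS2 cnt_cat in c0.
rewrite expS2.
set n := (2 ^ m)%N in c0 cd *.
set S2 := (fun k => S (n + k)%N) in c0 cd *.
set c1 := cnt n S in c0 cd *.
set c2 := cnt n S2 in c0 cd *.
set d := (2 ^ (m - r))%N in cd.
have [A|A] := boolP ((0 < c1) && (c1 < d))%N.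
  case/andP: A => A1 A2; have [a ain ia] := IH r S rm' A1 A2.
  exists (a ++ nseq n 0).
    by rewrite /= Hle !mem_cat (map_f (fun a => a ++ nseq n 0) ain) !orbT.
  by rewrite inter_cat ?(size_Hrows ain) // ia inter_nseq.
have [B|B] := boolP ((0 < c2) && (c2 < d))%N.
  case/andP: B => B1 B2; have [a ain ia] := IH r S2 rm' B1 B2.
  exists (nseq n 0 ++ a).
    by rewrite /= Hle !mem_cat (map_f (fun a => nseq n 0 ++ a) ain) !orbT.
  by rewrite inter_cat ?size_nseq // ia inter_nseq.
have c1n := cnt_le n S; have c2n := cnt_le n S2.
have n0 : (0 < n)%N by rewrite expn_gt0.
case: r rm Hle rm' E @d A B cd => [|r] rm Hle rm' E d A B cd.
  have dn : d = n by rewrite /d subn0.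
  rewrite dn in A B cd.
  exists (e0 n ++ e0 n); first by rewrite /=; exact: mem_head.
  rewrite inter_cat ?size_e0 // !inter_e0 //.
  have [[C1 C2]|[C1 C2]] : (c1 = 0 /\ c2 = n \/ c1 = n /\ c2 = 0)%N by lia.
    by rewrite (cnt0 C1 n0); have := cntn C2 n0; rewrite /S2 => ->.
  by rewrite (cntn C1 n0); have := cnt0 C2 n0; rewrite /S2 => ->.
have E' : (2 ^ (m - r) = d + d)%N by rewrite /d -expS2 subnSK.
have rm'' : (r <= m)%N by lia.
have [[C1 C2]|[C1 C2]] : (c1 = 0 /\ 0 < c2 < d + d \/ c2 = 0 /\ 0 < c1 < d + d)%N by lia.
  case/andP: C2; rewrite -E' => C2 C3; have [b bin ib] := IH r S2 rm'' C2 C3.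
  exists (b ++ b); first by rewrite /= Hle mem_cat (map_f (fun b => b ++ b) bin).
  rewrite inter_cat ?(size_Hrows bin) // ib.
  by have := inter_le n S b; rewrite -/c1 C1; case: (inter n S b).
case/andP: C2; rewrite -E' => C2 C3; have [b bin ib] := IH r S rm'' C2 C3.
exists (b ++ b); first by rewrite /= Hle mem_cat (map_f (fun b => b ++ b) bin).
rewrite inter_cat ?(size_Hrows bin) // ib.
by have := inter_le n S2 b; rewrite -/c2 C1; case: (inter n S2 b).
Qed.


Lemma weight m r : (r <= m)%N ->
  exists2 g, g \in RM_rows r m & inter (2 ^ m) predT g = (2 ^ (m - r))%N.
Proof.
elim: m r => [|m IH] r rm.
  exists [:: 1]; first by rewrite /= mem_head.
  by rewrite sub0n /inter /=.
have n0 : (0 < 2 ^ m.+1)%N by rewrite expn_gt0.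
case Hle: (m.+1 <= r)%N.
  exists (e0 (2 ^ m.+1)); first by rewrite /= Hle; exact: e0_id.
  by rewrite inter_e0 // (_ : m.+1 - r = 0)%N //; lia.
case: r rm Hle => [|r] rm Hle.
  exists (nseq (2 ^ m.+1) 1); first exact: mem_head.
  rewrite subn0 /inter (eq_in_count (a2 := predT)) ?count_predT ?size_iota // => k.
  by rewrite mem_iota /= => kn; rewrite nth_nseq kn oner_eq0.
have rm' : (r <= m)%N by lia.
have [h hin ih] := IH r rm'.
exists (nseq (2 ^ m) 0 ++ h).
  by rewrite /= Hle mem_cat (map_f (fun h => nseq (2 ^ m) 0 ++ h) hin) orbT.
by rewrite expS2 inter_cat ?size_nseq // inter_nseq ih subSS.
Qed.

Definition Fsum r m := (\sum_(0 <= i < m - r) 'C(r + i, i) * 2 ^ i)%N.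

Lemma F0rec m : Fsum 0 m.+1 = (1 + 2 * Fsum 0 m)%N.
Proof.
rewrite /Fsum !subn0 big_nat_recl // add0n bin0 expn0 muln1; congr (_ + _)%N.
rewrite big_distrr /=; apply: eq_big_nat => i _.
by rewrite !add0n !binn expnS; lia.
Qed.

Lemma FSrec r m : (r < m)%N -> Fsum r.+1 m.+1 = (Fsum r m + 2 * Fsum r.+1 m)%N.
Proof.
move=> rm; rewrite /Fsum.
have -> : (m.+1 - r.+1 = (m - r.+1).+1)%N by lia.
have -> : (m - r = (m - r.+1).+1)%N by lia.
set k := (m - r.+1)%N.
rewrite !big_nat_recl // !addn0 !bin0 expn0 muln1 -addnA; congr (_ + _)%N.
rewrite big_distrr /= -big_split /=; apply: eq_big_nat => i _.
rewrite addnS binS expnS addSn -addnS; lia.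
Qed.

Lemma size_H m r : (r <= m)%N -> size (Hrows r m) = Fsum r m.
Proof.
elim: m r => [|m IH] r rm.
  by rewrite /Fsum (_ : r = 0)%N ?big_geq //; lia.
case Hle: (m.+1 <= r)%N.
  by rewrite /= Hle /Fsum big_geq //; lia.
have rm' : (r <= m)%N by lia.
rewrite /= Hle !size_cat !size_map (IH r rm').
case: r rm Hle rm' => [|r] rm Hle rm'.
  by rewrite F0rec /=; lia.
rewrite FSrec // size_map (IH r) 1?ltnW //; lia.
Qed.


Definition mat_of (L : seq (seq 'F_2)) n : 'M['F_2]_(size L, n) :=
  \matrix_(i, j) nth 0 (nth [::] L i) j.
Definition rv_of n (s : seq 'F_2) : 'rV['F_2]_n := \row_j nth 0 s j.
Definition seq_of n (v : 'rV['F_2]_n) : seq 'F_2 := [seq v 0 j | j <- enum 'I_n].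

Lemma nth_seq_of n (v : 'rV['F_2]_n) (j : 'I_n) : nth 0 (seq_of v) j = v 0 j.
Proof.
by rewrite /seq_of (nth_map j) ?size_enum_ord ?ltn_ord // nth_ord_enum.
Qed.

Lemma size_seq_of n (v : 'rV['F_2]_n) : size (seq_of v) = n.
Proof. by rewrite size_map size_enum_ord. Qed.

Lemma rv_seq_of n (v : 'rV['F_2]_n) : rv_of n (seq_of v) = v.
Proof. by apply/rowP => j; rewrite mxE nth_seq_of. Qed.

Lemma idx_lt (L : seq (seq 'F_2)) h : h \in L -> (index h L < size L)%N.
Proof. by rewrite index_mem. Qed.

Lemma mem_row_mx L n h (hL : h \in L) :
  row (Ordinal (idx_lt hL)) (mat_of L n) = rv_of n h.
Proof. by apply/rowP => j; rewrite !mxE /= nth_index. Qed.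

Lemma lspan_sub_mx L n v : lspan L n v -> (rv_of n v <= mat_of L n)%MS.
Proof.
elim.
  have -> : rv_of n (nseq n 0) = 0 by apply/rowP => j; rewrite !mxE nth_nseq if_same.
  exact: sub0mx.
move=> h w hL hs Hw IH.
have -> : rv_of n (vadd h w) = rv_of n h + rv_of n w.
  by apply/rowP => j; rewrite !mxE nth_vadd // hs (lspan_size Hw).
by rewrite addmx_sub // -(mem_row_mx n hL) row_sub.
Qed.

Lemma mulmx_ldot L1 L2 n (i : 'I_(size L1)) (j : 'I_(size L2)) :
  (mat_of L1 n *m (mat_of L2 n)^T) i j = ldot n (nth [::] L1 i) (nth [::] L2 j).
Proof. by rewrite mxE; apply: eq_bigr => k _; rewrite !mxE. Qed.

Lemma card_count' n (q : pred nat) :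
  #|[pred j : 'I_n | q (val j)]| = count q (iota 0 n).
Proof.
rewrite -val_enum_ord count_map cardE /enum_mem size_filter /=.
rewrite -enumT (@eq_filter _ _ predT) // filter_predT.
by apply: eq_count.
Qed.

Lemma dot_card n (c v : 'rV['F_2]_n) :
  (c *m v^T) 0 0 = (#|[set j | (c 0 j != 0) && (v 0 j != 0)]|)%:R.
Proof.
rewrite mxE -sum1_card natr_sum [RHS]big_mkcond /=; apply: eq_bigr => j _.
by rewrite !mxE F2mul inE; case: ifP.
Qed.


Lemma bigmin_le_nat (I : eqType) (r : seq I) (P : pred I) (F : I -> nat) x j :
  j \in r -> P j -> (\big[minn/x]_(i <- r | P i) F i <= F j)%N.
Proof.
elim: r => // a r IH; rewrite in_cons big_cons => /orP[/eqP <- Pj|jr Pj].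
  by rewrite Pj geq_minl.
case: (P a); last exact: IH.
exact: leq_trans (geq_minr _ _) (IH jr Pj).
Qed.

Lemma theorem14_aux (m r : nat) :
  (1 <= m)%N -> (r <= m)%N ->
  stopping_redundancy_le (RM_gen r m)
    (\sum_(0 <= i < m - r) 'C(r + i, i) * 2 ^ i)%N.
Proof.
move=> _ rm.
set n := (2 ^ m)%N.
pose Gr := RM_rows r m; pose Hr := Hrows r m.
pose G : 'M['F_2]_(size Gr, n) := mat_of Gr n.
pose Hm : 'M['F_2]_(size Hr, n) := mat_of Hr n.
have GE : RM_gen r m = G by [].
rewrite GE.
have GH0 : G *m Hm^T = 0.
  apply/matrixP => i j; rewrite mulmx_ldot mxE.
  by apply: orth rm _ _; apply: mem_nth.
have par : parity_check G Hm.
  move=> v; split.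
    case/submxP=> w -> c /submxP[u ->].
    by rewrite trmx_mul mulmxA -(mulmxA u) GH0 mulmx0 mul0mx.
  move=> H.
  have sp : lspan Hr n (seq_of v).
    apply: span_dual => //; first exact: size_seq_of.
    move=> g gin.
    have := H _ (row_sub (Ordinal (idx_lt gin)) G).
    move/matrixP => /(_ 0 0); rewrite !mxE => <-.
    apply: eq_bigr => k _; rewrite !mxE nth_index // nth_seq_of //.
  by rewrite -(rv_seq_of v); apply: lspan_sub_mx.
have parity : forall c : 'rV['F_2]_n, (c <= G)%MS -> forall i : 'I_(size Hr),
    #|[set j | (c 0 j != 0) && (Hm i j != 0)]| != 1%N.
  move=> c cG i; apply/negP => /eqP E.
  have := (par (row i Hm)).1 (row_sub i Hm) c cG.
  move/matrixP => /(_ 0 0); rewrite dot_card mxE.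
  have -> : #|[set j | (c 0 j != 0) && (row i Hm 0 j != 0)]| = 1%N.
    by apply: etrans _ E; apply: eq_card => j; rewrite !inE mxE.
  by move/eqP; rewrite oner_eq0.
set d := (2 ^ (m - r))%N.
have stopd : stop_ok Hm d.
  move=> S S0 Sd.
  pose q := fun k => [exists j in S, val j == k].
  have qv : forall j : 'I_n, q (val j) = (j \in S).
    move=> j; apply/existsP/idP => [[j' /andP[j'S /eqP e]]|jS].
      by rewrite -(val_inj e).
    by exists j; rewrite jS eqxx.
  have cS : #|S| = cnt n q.
    by rewrite /cnt -card_count'; apply: eq_card => j; rewrite inE qv.
  rewrite cS in S0 Sd.
  have [h hin ih] := stop rm S0 Sd.
  exists (Ordinal (idx_lt hin)).
  apply: etrans _ ih; rewrite /inter -card_count'; apply: eq_card => j; rewrite !inE qv.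
  by rewrite mxE /= nth_index.
have [g0 g0in wg0] := weight rm.
pose c0 := row (Ordinal (idx_lt g0in)) G.
have c0G : (c0 <= G)%MS by apply: row_sub.
have wc0 : wt c0 = d.
  apply: etrans _ wg0; rewrite /wt /inter -card_count'; apply: eq_card => j; rewrite !inE /=.
  by rewrite !mxE /= nth_index.
have d0 : (0 < d)%N by rewrite expn_gt0.
have c0n0 : c0 != 0.
  apply/eqP => c00; move: wc0; rewrite c00 /wt.
  rewrite (eq_card (B := pred0)) ?card0 => [|j]; first by move=> E; rewrite -E in d0.
  by rewrite inE mxE eqxx.
have wge : forall c : 'rV['F_2]_n, (c <= G)%MS -> c != 0 -> (d <= wt c)%N.
  move=> c cG cn0; rewrite leqNgt; apply/negP => lt.
  have pos : (0 < wt c)%N.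
    rewrite lt0n /wt cards_eq0; apply: contra cn0 => /eqP E.
    apply/eqP/rowP => j; rewrite mxE.
    have : j \notin [set j | c 0 j != 0] by rewrite E inE.
    by rewrite inE negbK => /eqP.
  have [i Hi] := stopd [set j | c 0 j != 0] pos lt.
  have := parity c cG i.
  have -> : #|[set j | (c 0 j != 0) && (Hm i j != 0)]| = 1%N.
    by apply: etrans _ Hi; apply: eq_card => j; rewrite !inE.
  by [].
have md : min_dist G = d.
  apply/eqP; rewrite eqn_leq; apply/andP; split.
    rewrite /min_dist -wc0; apply: bigmin_le_nat; first exact: mem_index_enum.
    by rewrite c0G c0n0.
  rewrite /min_dist; apply: (big_ind (fun x => d <= x)%N).
  - by rewrite /d leq_pexp2l // leq_subr.
  - by move=> x y dx dy; rewrite leq_min dx dy.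
  - by move=> c /andP[cG cn0]; apply: wge.
exists (size Hr), Hm; split.
  by rewrite size_H.
split=> //.
rewrite md; split=> // Hs.
have w1 : (0 < wt c0)%N by rewrite wc0.
have w2 : (wt c0 < d.+1)%N by rewrite wc0.
have [i Hi] := Hs [set j | c0 0 j != 0] w1 w2.
have := parity c0 c0G i.
have -> : #|[set j | (c0 0 j != 0) && (Hm i j != 0)]| = 1%N.
  by apply: etrans _ Hi; apply: eq_card => j; rewrite !inE.
by [].
Qed.

Local Close Scope ring_scope.
Unset Implicit Arguments.

Theorem theorem14 (m r : nat) :
  (1 <= m)%N -> (r <= m)%N ->
  stopping_redundancy_le (RM_gen r m)
    (\sum_(0 <= i < m - r) 'C(r + i, i) * 2 ^ i)%N.
Proof. exact: theorem14_aux. Qed.
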